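(* Let $f\in A[X]$ be monic with discriminant $\Delta=\mathrm{Res}_X(f,f')\neq 0$, and let $r=v(\Delta)$. Then the number of roots of $f$ in $K$ is at most $q^{\lfloor r/2\rfloor+1}$.
   Context: $K$ is a field complete with respect to a non-archimedean discrete valuation $v$, normalized by $v(\pi)=1$ for a uniformizer $\pi$ of the valuation ring $A=\{x\in K: v(x)\geq 0\}$; the residue field $A/\pi A$ is finite with $q$ elements. *)

(* Defs.v *)
From HB Require Import structures.
From mathcomp Require Import all_boot all_order all_algebra.
Set Implicit Arguments. Unset Strict Implicit. Unset Printing Implicit Defensive.
Import Order.TTheory GRing.Theory Num.Theory.
Local Open Scope ring_scope.

(* A valuation v : K -> int, meaningful on nonzero elements (v 0 = +oo by convention).
   vge v x n  means  v(x) >= n  (true for x = 0). *)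
Definition vge (K : fieldType) (v : K -> int) (x : K) (n : int) : bool :=
  (x == 0) || (n <= v x).

Definition in_A (K : fieldType) (v : K -> int) (x : K) : bool := vge v x 0.

(* K is complete w.r.t. the normalized discrete valuation v, and the residue
   field A / pi A has exactly q elements. *)
Record complete_dvf_finite_residue (K : fieldType) (v : K -> int) (q : nat) : Prop := {
  v_mul : forall x y : K, x != 0 -> y != 0 -> v (x * y) = v x + v y;
  v_add : forall x y : K, x != 0 -> y != 0 -> x + y != 0 ->
            Num.min (v x) (v y) <= v (x + y);
  v_uniformizer : exists pi : K, pi != 0 /\ v pi = 1;
  v_complete : forall u : nat -> K,
      (forall N : int, exists M : nat, forall m n : nat,
          (M <= m)%N -> (M <= n)%N -> vge v (u m - u n) N) ->
      exists l : K, forall N : int, exists M : nat, forall n : nat,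
          (M <= n)%N -> vge v (u n - l) N;
  v_residue : exists s : seq K,
      [/\ size s = q,
          all (in_A v) s,
          (forall i j : nat, (i < q)%N -> (j < q)%N -> vge v (s`_i - s`_j) 1 -> i = j)
        & (forall x : K, in_A v x -> exists2 i : nat, (i < q)%N & vge v (x - s`_i) 1)]
}.

(* Main.v *)
Require Import Defs.
From HB Require Import structures.
From mathcomp Require Import all_boot all_order all_algebra.
From mathcomp Require Import zify ring.
Import Order.TTheory GRing.Theory Num.Theory.
Local Open Scope ring_scope.
Set Implicit Arguments. Unset Strict Implicit. Unset Printing Implicit Defensive.

Definition rowsmx (K : fieldType) (d : nat) (g : nat -> {poly K}) : 'M[K]_d :=
  \matrix_(i, j) (g i)`_j.

Definition sylvd (K : fieldType) (d m : nat) (p q : {poly K}) : 'M[K]_d :=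
  rowsmx d (fun i => if (i < m)%N then 'X^i * p else 'X^(i - m) * q).

Lemma resultant_sylvd (K : fieldType) (p q : {poly K}) :
  resultant p q = \det (sylvd ((size q).-1 + (size p).-1) (size q).-1 p q).
Proof.
rewrite /resultant; congr (\det _); apply/matrixP => i j.
rewrite Sylvester_mxE !mxE; case: splitP => k hk /=; rewrite hk coefXnM.
  by rewrite ltnNge; case: leqP.
by rewrite addKn ltnNge; case: leqP.
Qed.

Lemma sum_ind (K : fieldType) d (F : nat -> K) c :
  \sum_(l < d) F l * ((l : nat) == c)%:R = if (c < d)%N then F c else 0.
Proof.
case: ltnP => h.
  rewrite (bigD1 (Ordinal h)) //= eqxx mulr1 big1 ?addr0 // => l.
  by rewrite -val_eqE /= => /negbTE ->; rewrite mulr0.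
rewrite big1 // => l _; have: (l < c)%N by apply: leq_trans (ltn_ord l) h.
by rewrite ltn_neqAle => /andP[/negbTE -> _]; rewrite mulr0.
Qed.

Lemma sum_indo (K : fieldType) d (F : nat -> K) (c : 'I_d) :
  \sum_(l < d) F l * (l == c)%:R = F c.
Proof. by rewrite (@sum_ind K d F c) ltn_ord. Qed.

Definition Tm (K : fieldType) d (a : K) : 'M[K]_d :=
  \matrix_(l, k) (((l : nat) == k)%:R - a * ((l : nat) == k.+1)%:R).

Lemma Tm_mul (K : fieldType) d (a : K) (g : nat -> {poly K}) :
  (forall i : 'I_d, (size (g i) <= d)%N) ->
  rowsmx d g *m Tm d a = \matrix_(i, j) ((g i)`_j - a * (g i)`_j.+1).
Proof.
move=> hs; apply/matrixP => i j; rewrite !mxE.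
under eq_bigr => l _ do rewrite !mxE mulrBr mulrCA.
rewrite sumrB -mulr_sumr !sum_ind ltn_ord; congr (_ - a * _).
case: ltnP => // h; by rewrite nth_default // (leq_trans (hs i)).
Qed.

Lemma Tm_det (K : fieldType) d (a : K) : \det (Tm d a) = 1.
Proof.
rewrite det_trig; last first.
  apply/forallP => i; apply/forallP => j; apply/implyP => h; rewrite mxE.
  by rewrite (ltn_eqF h) (@ltn_eqF i j.+1 (ltnW h)) mulr0 subr0.
by rewrite big1 // => i _; rewrite mxE eqxx (ltn_eqF (ltnSn i)) mulr0 subr0.
Qed.

Definition Em (K : fieldType) d m (a : K) : 'M[K]_d :=
  \matrix_(r, s) (((r : nat) == s)%:R - (a *+ (m < r)%N) * ((s : nat) == r.-1)%:R).

Lemma Em_mul (K : fieldType) d m (a : K) (g : nat -> {poly K}) :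
  Em d m a *m rowsmx d g = \matrix_(r, j) ((g r)`_j - (a *+ (m < r)%N) * (g r.-1)`_j).
Proof.
apply/matrixP => r j; rewrite !mxE.
under eq_bigr => l _ do rewrite !mxE mulrBl mulrC.
rewrite sumrB; congr (_ - _).
  under eq_bigr => l _ do rewrite eq_sym.
  by rewrite (@sum_indo K d (fun l => (g l)`_j)).
rewrite (eq_bigr (fun i : 'I_d => a *+ (m < r) * ((g i)`_j * ((i:nat) == r.-1)%:R))); last first.
  by move=> i _; rewrite mulrAC -mulrA.
by rewrite -mulr_sumr (@sum_ind K d (fun i => (g i)`_j)) (leq_ltn_trans (leq_pred r) (ltn_ord r)).
Qed.

Lemma Em_det (K : fieldType) d m (a : K) : \det (Em d m a) = 1.
Proof.
rewrite det_trig; last first.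
  apply/forallP => i; apply/forallP => j; apply/implyP => h; rewrite mxE.
  by rewrite (ltn_eqF h) (gtn_eqF (leq_ltn_trans (leq_pred i) h)) mulr0 subr0.
rewrite big1 // => i _; rewrite mxE eqxx.
case: (i : nat) => [|k]; first by rewrite ltn0 mulr0n mul0r subr0.
by rewrite /= (gtn_eqF (ltnSn k)) mulr0 subr0.
Qed.

Lemma coefXS (K : fieldType) (w : {poly K}) j : ('X * w)`_j.+1 = w`_j.
Proof. by rewrite coefXM. Qed.

Lemma size_XnM (K : fieldType) k (p : {poly K}) : (size ('X^k * p)%R <= k + size p)%N.
Proof. by apply: leq_trans (size_polyMleq _ _) _; rewrite size_polyXn addSn. Qed.

Lemma det_sylv_core (K : fieldType) m n (p q : {poly K}) (a : K) :
  (size p <= n.+1)%N -> (size q <= m.+1)%N ->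
  \det (sylvd (m + n).+1 m (('X - a%:P) * p) q) =
  (-1) ^+ m * q.[a] * \det (sylvd (m + n) m p q).
Proof.
move=> sp sq.
set c := q.[a].
have [Q hQ] : exists Q, q - c%:P = Q * ('X - a%:P).
  by apply/factor_theorem; rewrite /root !hornerE subrr.
pose hq := c%:P + 'X * Q.
pose h := fun r : nat => if (r < m)%N then 'X^(r.+1) * p else if r == m then hq else 'X^(r - m) * q.
have sQ : (size Q <= m)%N.
  have [->|Q0] := eqVneq Q 0; first by rewrite size_poly0.
  have : (size (Q * ('X - a%:P))%R <= m.+1)%N.
    rewrite -hQ; apply: leq_trans (size_polyD _ _) _.
    by rewrite geq_max sq size_polyN size_polyC; case: (c != 0).
  by rewrite size_Mmonic ?monicXsubC // size_XsubC addn2.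
have qE : q = c%:P + 'X * Q - a%:P * Q.
  by rewrite -addrA -mulrBl (mulrC _ Q) -hQ addrC subrK.
have hs : forall i : 'I_(m + n).+1, (size (h i) <= (m + n).+1)%N.
  move=> i; rewrite /h; case: ltnP => hi.
    by apply: leq_trans (size_XnM _ _) _; lia.
  case: eqP => hi2.
    apply: leq_trans (size_polyD _ _) _; rewrite geq_max size_polyC.
    rewrite (leq_trans (leq_b1 _)) //=.
    apply: leq_trans (size_polyMleq _ _) _; rewrite size_polyX /=.
    by rewrite ltnS (leq_trans sQ) // leq_addr.
  apply: leq_trans (size_XnM _ _) _.
  have := ltn_ord i; lia.
have E1 : Em (m + n).+1 m a *m sylvd (m + n).+1 m (('X - a%:P) * p) q =
          rowsmx (m + n).+1 h *m Tm (m + n).+1 a.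
  rewrite /sylvd Em_mul Tm_mul //; apply/matrixP => r j; rewrite !mxE /h.
  case: (ltngtP r m) => hr.
  - rewrite mulr0n mul0r subr0 exprS -mulrA coefXS mulrCA mulrBl coefB coefCM //.
  - have e : (r.-1 < m)%N = false by lia.
    have e2 : (r - m = (r.-1 - m).+1)%N by lia.
    by rewrite e mulr1n e2 exprS -mulrA coefXS.
  - rewrite hr subnn expr0 mul1r mulr0n mul0r subr0 /hq {1}qE coefB !coefD coefCM coefXS !coefC /=.
    by rewrite add0r.
have -> : \det (sylvd (m + n).+1 m (('X - a%:P) * p) q) = \det (rowsmx (m + n).+1 h).
  by rewrite -[LHS]mul1r -(Em_det (m + n).+1 m a) -det_mulmx E1 det_mulmx Tm_det mulr1.
have hm : (m < (m + n).+1)%N by rewrite ltnS leq_addr.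
rewrite (expand_det_col _ ord0) (bigD1 (Ordinal hm)) //= big1 ?addr0; last first.
  move=> i /negbTE hi; rewrite mxE /h.
  case: ltnP => hi1; first by rewrite coefXnM /= mul0r.
  have hne : ((i : nat) == m) = false by rewrite -hi -val_eqE.
  have him : (0 < i - m)%N by move/negbT: hne; lia.
  by rewrite hne coefXnM him mul0r.
rewrite mxE /h /= ltnn eqxx /hq coefD coefC coefXM /= addr0.
rewrite /cofactor /= addn0 mulrCA mulrA; congr (_ * \det _).
apply/matrixP => i j; rewrite !mxE /= /bump.
have -> : ((0 <= j) + j = j.+1)%N by [].
case: (leqP m i) => hi.
  have -> : (true + i = i.+1)%N by [].
  have e : ((i.+1 < m)%N = false) by lia.
  have e1 : ((i.+1 == m) = false) by lia.
  have e2 : ((i.+1 - m) = (i - m).+1)%N by lia.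
  by rewrite e e1 e2 exprS -mulrA coefXS.
have -> : (false + i = i)%N by [].
by rewrite hi exprS -mulrA coefXS.
Qed.

Lemma resultant_XsubC (K : fieldType) (p q : {poly K}) (a : K) : p != 0 ->
  resultant (('X - a%:P) * p) q = (-1) ^+ (size q).-1 * q.[a] * resultant p q.
Proof.
move=> p0; rewrite !resultant_sylvd.
have -> : (size (('X - a%:P) * p)).-1 = ((size p).-1).+1.
  rewrite mulrC size_Mmonic ?monicXsubC // size_XsubC addn2 /=.
  by rewrite prednK // size_poly_gt0.
by rewrite addnS det_sylv_core // leqSpred.
Qed.

Lemma v1 (K : fieldType) (v : K -> int) q (hK : complete_dvf_finite_residue v q) : v 1 = 0.
Proof.
have h : forall a : int, a = a + a -> a = 0 by move=> a; lia.
by apply: h; have := v_mul hK (oner_neq0 K) (oner_neq0 K); rewrite mulr1.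
Qed.

Lemma vN1 (K : fieldType) (v : K -> int) q (hK : complete_dvf_finite_residue v q) : v (-1) = 0.
Proof.
have n1 : (-1 : K) != 0 by rewrite oppr_eq0 oner_neq0.
have h : forall a : int, 0 = a + a -> a = 0 by move=> a; lia.
by apply: h; have := v_mul hK n1 n1; rewrite mulrNN mulr1 (v1 hK).
Qed.

Lemma vN (K : fieldType) (v : K -> int) q (hK : complete_dvf_finite_residue v q) x :
  x != 0 -> v (- x) = v x.
Proof.
move=> x0; have n1 : (-1 : K) != 0 by rewrite oppr_eq0 oner_neq0.
by rewrite -mulN1r (v_mul hK n1 x0) (vN1 hK) add0r.
Qed.

Lemma vge_add (K : fieldType) (v : K -> int) q (hK : complete_dvf_finite_residue v q) x y N :
  vge v x N -> vge v y N -> vge v (x + y) N.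
Proof.
rewrite /vge => hx hy.
have [x0|x0] := eqVneq x 0; first by rewrite x0 add0r.
have [y0|y0] := eqVneq y 0; first by rewrite y0 addr0.
have [s0|s0] := eqVneq (x + y) 0; first by [].
rewrite (negbTE x0) /= in hx; rewrite (negbTE y0) /= in hy.
have := v_add hK x0 y0 s0; rewrite ge_min => /orP[] h.
  exact: le_trans hx h.
exact: le_trans hy h.
Qed.

Lemma vge_opp (K : fieldType) (v : K -> int) q (hK : complete_dvf_finite_residue v q) x N :
  vge v x N -> vge v (- x) N.
Proof.
rewrite /vge oppr_eq0; have [->|x0] //= := eqVneq x 0.
by rewrite (vN hK x0).
Qed.

Lemma vge_mul (K : fieldType) (v : K -> int) q (hK : complete_dvf_finite_residue v q) x y N M :
  vge v x N -> vge v y M -> vge v (x * y) (N + M).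
Proof.
rewrite /vge mulf_eq0; have [->|x0] //= := eqVneq x 0.
have [->|y0] //= := eqVneq y 0; rewrite (v_mul hK x0 y0) => hx hy.
exact: lerD.
Qed.

Lemma vge_le (K : fieldType) (v : K -> int) x N M :
  vge v x N -> M <= N -> vge v x M.
Proof. by rewrite /vge => /orP[->//|h] hM; rewrite (le_trans hM h) orbT. Qed.

Lemma inA0 (K : fieldType) (v : K -> int) : in_A v 0.
Proof. by rewrite /in_A /vge eqxx. Qed.

Lemma inA1 (K : fieldType) (v : K -> int) q (hK : complete_dvf_finite_residue v q) : in_A v 1.
Proof. by rewrite /in_A /vge (v1 hK) lexx orbT. Qed.

Lemma inAN1 (K : fieldType) (v : K -> int) q (hK : complete_dvf_finite_residue v q) : in_A v (-1).
Proof. rewrite /in_A -[-1]/(- (1 : K)); apply: (vge_opp hK); exact: (inA1 hK). Qed.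

Lemma inAD (K : fieldType) (v : K -> int) q (hK : complete_dvf_finite_residue v q) x y :
  in_A v x -> in_A v y -> in_A v (x + y).
Proof. move=> hx hy; exact: (vge_add hK hx hy). Qed.

Lemma inAM (K : fieldType) (v : K -> int) q (hK : complete_dvf_finite_residue v q) x y :
  in_A v x -> in_A v y -> in_A v (x * y).
Proof. by move=> hx hy; have := vge_mul hK hx hy. Qed.

Lemma inAN (K : fieldType) (v : K -> int) q (hK : complete_dvf_finite_residue v q) x :
  in_A v x -> in_A v (- x).
Proof. move=> hx; exact: (vge_opp hK hx). Qed.

Lemma inAB (K : fieldType) (v : K -> int) q (hK : complete_dvf_finite_residue v q) x y :
  in_A v x -> in_A v y -> in_A v (x - y).
Proof. move=> hx hy; exact: (inAD hK hx (inAN hK hy)). Qed.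

Lemma inAX (K : fieldType) (v : K -> int) q (hK : complete_dvf_finite_residue v q) x k :
  in_A v x -> in_A v (x ^+ k).
Proof.
move=> hx; elim: k => [|k ih]; first by rewrite expr0 (inA1 hK).
by rewrite exprS (inAM hK).
Qed.

Lemma inAMn (K : fieldType) (v : K -> int) q (hK : complete_dvf_finite_residue v q) x k :
  in_A v x -> in_A v (x *+ k).
Proof.
move=> hx; elim: k => [|k ih]; first by rewrite mulr0n (inA0 v).
by rewrite mulrS (inAD hK).
Qed.

Lemma inA_sum (K : fieldType) (v : K -> int) q (hK : complete_dvf_finite_residue v q)
  (I : Type) (r : seq I) (P : pred I) (F : I -> K) :
  (forall i, P i -> in_A v (F i)) -> in_A v (\sum_(i <- r | P i) F i).
Proof.
move=> h; apply: (big_ind (in_A v)) => //; first exact: inA0.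
by move=> a b ha hb; exact: (inAD hK ha hb).
Qed.

Lemma inA_prod (K : fieldType) (v : K -> int) q (hK : complete_dvf_finite_residue v q)
  (I : Type) (r : seq I) (P : pred I) (F : I -> K) :
  (forall i, P i -> in_A v (F i)) -> in_A v (\prod_(i <- r | P i) F i).
Proof.
move=> h; apply: (big_ind (in_A v)) => //; first exact: (inA1 hK).
by move=> a b ha hb; exact: (inAM hK ha hb).
Qed.

Lemma inA_horner (K : fieldType) (v : K -> int) q (hK : complete_dvf_finite_residue v q)
  (p : {poly K}) x :
  (forall i, in_A v p`_i) -> in_A v x -> in_A v p.[x].
Proof.
move=> hp hx; rewrite horner_coef; apply: (inA_sum hK) => i _.
by exact: (inAM hK (hp i) (inAX hK _ hx)).
Qed.

Lemma inA_det (K : fieldType) (v : K -> int) q (hK : complete_dvf_finite_residue v q)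
  n (M : 'M[K]_n) :
  (forall i j, in_A v (M i j)) -> in_A v (\det M).
Proof.
move=> hM; rewrite /determinant; apply: (inA_sum hK) => s _.
apply: (inAM hK); first exact: (inAX hK _ (inAN1 hK)).
by apply: (inA_prod hK) => i _.
Qed.

Lemma inA_resultant (K : fieldType) (v : K -> int) q (hK : complete_dvf_finite_residue v q)
  (p r : {poly K}) :
  (forall i, in_A v p`_i) -> (forall i, in_A v r`_i) -> in_A v (resultant p r).
Proof.
move=> hp hr; apply: (inA_det hK) => i j; rewrite Sylvester_mxE.
by case: split => k; apply: (inAMn hK).
Qed.

Lemma inA_deriv (K : fieldType) (v : K -> int) q (hK : complete_dvf_finite_residue v q)
  (p : {poly K}) :
  (forall i, in_A v p`_i) -> forall i, in_A v p^`()`_i.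
Proof. by move=> hp i; rewrite coef_deriv; apply: (inAMn hK). Qed.

Lemma vge_sum (K : fieldType) (v : K -> int) q (hK : complete_dvf_finite_residue v q)
  (I : Type) (r : seq I) (P : pred I) (F : I -> K) N :
  (forall i, P i -> vge v (F i) N) -> vge v (\sum_(i <- r | P i) F i) N.
Proof.
move=> h; apply: (big_ind (fun x => vge v x N)) => //; first by rewrite /vge eqxx.
by move=> a b ha hb; exact: (vge_add hK ha hb).
Qed.

Lemma root_inA (K : fieldType) (v : K -> int) q (hK : complete_dvf_finite_residue v q)
  (f : {poly K}) x :
  (forall i, in_A v f`_i) -> f \is monic -> root f x -> in_A v x.
Proof.
move=> hf hm hr; apply/negPn/negP => hx.
have x0 : x != 0 by apply: contraNneq hx => ->; exact: inA0.
have vx : v x < 0 by move: hx; rewrite /in_A /vge (negbTE x0) /= -ltNge.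
set y := x^-1.
have y0 : y != 0 by rewrite invr_eq0.
have vy : 1 <= v y.
  have := v_mul hK x0 y0; rewrite mulfV // (v1 hK).
  have h : forall a b : int, a < 0 -> 0 = a + b -> 1 <= b by move=> a b; lia.
  by move/h; apply.
have vgy : vge v y 1 by rewrite /vge vy orbT.
set d := (size f).-1.
have sf : size f = d.+1 by rewrite prednK // size_poly_gt0 monic_neq0.
have ld : f`_d = 1 by move/monicP: hm; rewrite /lead_coef.
have hsum : \sum_(i < d) f`_i * y ^+ (d - i) = -1.
  have : f.[x] * y ^+ d = 0 by rewrite (rootP hr) mul0r.
  rewrite horner_coef sf big_ord_recr /= mulrDl mulr_suml ld mul1r -exprMn mulfV // expr1n.
  have e : forall i : 'I_d, f`_i * x ^+ i * y ^+ d = f`_i * y ^+ (d - i).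
    move=> i; rewrite -mulrA; congr (_ * _).
    have -> : y ^+ d = y ^+ (d - i) * y ^+ i by rewrite -exprD subnK // ltnW.
    by rewrite mulrCA -exprMn mulfV // expr1n mulr1.
  rewrite (eq_bigr (fun i : 'I_d => f`_i * y ^+ (d - i))); last by move=> i _; exact: e i.
  by move/eqP; rewrite addr_eq0 => /eqP.
have : vge v (\sum_(i < d) f`_i * y ^+ (d - i)) 1.
  apply: (vge_sum hK) => i _.
  have hi : (d - i = (d - i).-1.+1)%N by rewrite prednK // subn_gt0.
  rewrite hi exprS.
  have h1 := vge_mul hK (hf i) (vge_mul hK vgy (inAX hK (d - i).-1 (vge_le vgy (@ler01 int)))).
  by apply: (vge_le h1); rewrite add0r addr0.
rewrite hsum /vge oppr_eq0 oner_eq0 /= (vN1 hK) //.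
Qed.

Lemma div_inA (K : fieldType) (v : K -> int) q (hK : complete_dvf_finite_residue v q)
  (f g : {poly K}) a :
  (forall i, in_A v f`_i) -> in_A v a -> f = g * ('X - a%:P) -> forall i, in_A v g`_i.
Proof.
move=> hf ha hfg.
have rec : forall k, g`_k = f`_k.+1 + a * g`_k.+1.
  by move=> k; rewrite hfg mulrBr coefB coefMX coefMC /= mulrC subrK.
suff : forall d k, (size g <= k + d)%N -> in_A v g`_k.
  by move=> h i; apply: (h (size g) i); rewrite leq_addl.
elim => [|d ih] k hk; first by rewrite nth_default; [exact: inA0 | rewrite -(addn0 k)].
rewrite rec; apply: (inAD hK (hf _) (inAM hK ha (ih _ _))).
by rewrite addSnnS.
Qed.

Lemma deriv_root (K : fieldType) (w : {poly K}) a :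
  (('X - a%:P) * w)^`().[a] = w.[a].
Proof.
by rewrite derivM derivXsubC mul1r hornerD hornerM hornerXsubC subrr mul0r addr0.
Qed.

Lemma sum_b1 (q k : nat) : (k < q)%N -> (\sum_(i < q) ((k == i) : nat))%N = 1%N.
Proof.
move=> hk; rewrite (bigD1 (Ordinal hk)) //= eqxx big1 ?addn0 // => i.
by rewrite -val_eqE /= eq_sym => /negbTE ->.
Qed.

Lemma pigeon (K : fieldType) (v : K -> int) q (hK : complete_dvf_finite_residue v q)
  (t : nat) : forall s : seq K, uniq s -> all (in_A v) s -> (q ^ t < size s)%N ->
  exists x y, [/\ x \in s, y \in s, x != y & vge v (x - y) t%:Z].
Proof.
have [r [hr1 hr2 _ hr4]] := v_residue hK.
have [pi [pi0 vpi]] := v_uniformizer hK.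
elim: t => [|t ih] s us As hs.
  case: s us As hs => [|x [|y s]] //= /andP[hxs _] /and3P[Ax Ay _] _.
  exists x, y; split; rewrite ?inE ?eqxx ?orbT //.
    by apply: contraNneq hxs => ->; rewrite inE eqxx.
  exact: (inAB hK Ax Ay).
pose idx := fun x => find (fun i => vge v (x - r`_i) 1) (iota 0 q).
have hidx : forall x, in_A v x -> (idx x < q)%N /\ vge v (x - r`_(idx x)) 1.
  move=> x /hr4 [i hi hxi].
  have hh : has (fun i => vge v (x - r`_i) 1) (iota 0 q).
    by apply/hasP; exists i => //; rewrite mem_iota.
  split; first by move: hh; rewrite has_find size_iota.
  have := nth_find 0%N hh; rewrite nth_iota //.
  by move: hh; rewrite has_find size_iota.
have hcnt : forall s', all (in_A v) s' ->
    (\sum_(i < q) count (fun x => idx x == i) s')%N = size s'.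
  elim=> [|x s' ihs] /=; first by rewrite big1.
  move/andP=> [Ax As']; rewrite big_split /= ihs // sum_b1 //.
  exact: (hidx x Ax).1.
have [i hi] : exists i : 'I_q, (q ^ t < count (fun x => idx x == i) s)%N.
  suff : [exists i : 'I_q, (q ^ t < count (fun x => idx x == i) s)%N] by move/existsP.
  apply: contraT => /existsPn hn.
  move: hs; rewrite -(hcnt s As) expnS => hs.
  have : (\sum_(i < q) count (fun x => idx x == i) s <= \sum_(i < q) q ^ t)%N.
    by apply: leq_sum => i _; rewrite leqNgt hn.
  by rewrite sum_nat_const card_ord leqNgt hs.
pose phi := fun x => (x - r`_i) / pi.
have phi_inj : injective phi.
  by move=> x y /(mulIf (invr_neq0 pi0)) /addIr.
have vpiV : vge v pi^-1 (-1).
  have := v_mul hK pi0 (invr_neq0 pi0); rewrite mulfV // (v1 hK) vpi.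
  have h : forall b : int, 0 = 1 + b -> -1 <= b by move=> b; lia.
  by move/h; rewrite /vge => ->; rewrite orbT.
pose si := [seq x <- s | idx x == i].
have [x' [y' [hx' hy' nxy hxy]]] : exists x y, [/\ x \in map phi si, y \in map phi si, x != y
      & vge v (x - y) t%:Z].
  apply: ih.
  - by rewrite map_inj_uniq // filter_uniq.
  - apply/allP => z /mapP [x]; rewrite mem_filter => /andP [/eqP hxi xs] ->.
    have Ax : in_A v x by move/allP: As; apply.
    have := vge_mul hK (hidx x Ax).2 vpiV; rewrite hxi.
    by move/vge_le; apply; rewrite addrN.
  - by rewrite size_map size_filter.
move: hx' hy' nxy hxy => /mapP [x hx ->] /mapP [y hy ->] nxy hxy.
move: hx hy; rewrite !mem_filter => /andP [_ hx] /andP [_ hy].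
exists x, y; split => //.
  by apply: contraNneq nxy => ->.
have e : x - y = (phi x - phi y) * pi.
  by rewrite /phi -mulrBl mulfVK //; ring.
have := vge_mul hK hxy (_ : vge v pi 1); rewrite -e.
have -> : (t.+1)%:Z = t%:Z + 1 by rewrite -addn1 PoszD.
by apply; rewrite /vge vpi lexx orbT.
Qed.

Lemma arith_aux (t n o : nat) :
  (t.+1 + t.+1 <= n)%N -> (o <= 1)%N -> (o + 2 * t)%N = n -> False.
Proof. lia. Qed.

Unset Implicit Arguments. Set Strict Implicit. Set Printing Implicit Defensive.

Theorem corollary3p3 (K : fieldType) (v : K -> int) (q : nat)
  (hK : complete_dvf_finite_residue v q)
  (f : {poly K}) (hfA : forall i : nat, in_A v f`_i) (hmon : f \is monic)
  (hD : resultant f f^`() != 0)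
  (s : seq K) (huniq : uniq s) (hroots : all (root f) s) :
  (size s <= q ^ (`|v (resultant f f^`())|%N./2).+1)%N.
Proof.
set D := resultant f f^`() in hD *.
rewrite leqNgt; apply/negP => hs.
have As : all (in_A v) s.
  by apply/allP => x /(allP hroots) hx; exact: (root_inA hK hfA hmon hx).
set t := (`|v D|%N)./2 in hs.
have [a [b [ha hb nab hab]]] := pigeon hK huniq As hs.
have Aa : in_A v a := allP As a ha.
have Ab : in_A v b := allP As b hb.
have ra : root f a := allP hroots a ha.
have rb : root f b := allP hroots b hb.
have /factor_theorem [g1 hg1] := ra.
have rb1 : root g1 b.
  by move: rb; rewrite hg1 rootM root_XsubC eq_sym (negbTE nab) orbF.
have /factor_theorem [h hh] := rb1.
have Ag1 := div_inA hK hfA Aa hg1.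
have Ah := div_inA hK Ag1 Ab hh.
have f0 : f != 0 by exact: monic_neq0.
have h0 : h != 0 by apply: contraNneq f0 => h0; rewrite hg1 hh h0 !mul0r.
have fE : f = ('X - a%:P) * (('X - b%:P) * h) by rewrite hg1 hh mulrC (mulrC h).
have fE2 : f = ('X - b%:P) * (('X - a%:P) * h) by rewrite hg1 hh mulrAC mulrC (mulrC h).
have dA : f^`().[a] = (a - b) * h.[a] by rewrite {1}fE deriv_root hornerM hornerXsubC.
have dB : f^`().[b] = (b - a) * h.[b] by rewrite {1}fE2 deriv_root hornerM hornerXsubC.
set m := (size f^`()).-1.
have bh0 : ('X - b%:P) * h != 0 by rewrite mulf_neq0 // polyXsubC_eq0.
have DE : D = (-1) ^+ m * ((a - b) * h.[a]) * ((-1) ^+ m * ((b - a) * h.[b]) * resultant h f^`()).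
  by rewrite /D {1}fE resultant_XsubC // resultant_XsubC // dA dB.
set c := (-1) ^+ m * h.[a] * ((-1) ^+ m * (-1) * h.[b] * resultant h f^`()).
have DE2 : D = (a - b) * ((a - b) * c) by rewrite DE /c; ring.
have Ac : in_A v c.
  have Aha := inA_horner hK Ah Aa.
  have Ahb := inA_horner hK Ah Ab.
  have Ar := inA_resultant hK Ah (inA_deriv hK hfA).
  have As1 := inAX hK m (inAN1 hK).
  exact: (inAM hK (inAM hK As1 Aha) (inAM hK (inAM hK (inAM hK As1 (inAN1 hK)) Ahb) Ar)).
have := vge_mul hK hab (vge_mul hK hab Ac); rewrite -DE2 /vge (negbTE hD) /= addr0 => hv.
have h1 := odd_double_half `|v D|%N.
have h2 : (0 <= v D) by apply: le_trans hv.
have h3 := gez0_abs h2.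
have hn : ((t.+1 + t.+1)%N <= `|v D|%N)%N by rewrite -lez_nat PoszD h3.
have ho : (odd `|v D|%N <= 1)%N by case: odd.
move: hn ho h1; rewrite -/t -mul2n.
exact: arith_aux.
Qed.
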